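(* Let $v$ be a vertex of $K$ and let $P$ and $Q$ be chain-connected finite subcomplexes of $K$ containing $v$. If there is a cell-preserving isomorphism $\phi:P\to Q$ with $\phi(v)=v$, then $P=Q$.
   Context: $K$ is the decorated combinatorial tiling: a 2-dimensional CW-complex homeomorphic to the open disk, built as follows. A decorated pentagon has boundary vertices $v_1,\dots,v_5$ in cyclic order (indices mod 5) with corner labels $1,\dots,5$, corner $v_i$ labelled $i$. The rule $\omega$ adds a vertex $m_i$ inside each edge $v_iv_{i+1}$, interior vertices $c_1,\dots,c_5$, edges $c_ic_{i+1}$, $c_im_i$, and replaces the face by the central pentagon $c_1\cdots c_5$ (label $i+1$ at $c_i$) and petals $v_i\,m_i\,c_i\,c_{i-1}\,m_{i-1}$ with labels $i,i+1,i+2,i+3,i+4$ (mod 5) at these corners. $K_0$ is one decorated pentagon, $K_n=\omega^n(K_0)$, $K_n$ embeds label-preservingly onto the central superpentagon $\omega^n(\text{central face of }\omega(K_0))$ of $K_{n+1}$, and $K$ is the direct limit. Cell-preserving isomorphisms are required to preserve the corner labels (decorations). Chain-connected: any two faces are joined by a finite chain of faces of the subcomplex, consecutive ones sharing an edge. *)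

(* Defs.v *)
From mathcomp Require Import all_boot.
From Stdlib Require Import Relations List.
Set Implicit Arguments. Unset Strict Implicit. Unset Printing Implicit Defensive.

(** Corner labels 1..5 of the paper are encoded as [j : 'I_5]
  (paper label = j+1); arithmetic on labels is mod 5 ([ordS], [ord_pred]).
  Every face is an oriented pentagon whose corner with label j is
  [lcor f j]; its edge with label j joins corner j to corner j+1 and is
  [lfe f j] = (e, o), where o = true iff the (canonically oriented) edge e
  is traversed from its source to its target.

  Level n (the complex K_n = omega^n(K_0)) is described by three finite
  types of cells:
   - K_0 : vertices v_j, edges v_j v_{j+1}, one face;
   - K_{n+1} = omega(K_n):
       vertices  = old vertices v  +  midpoints  Mid e  +  centres  Cen f i
       edges     = halves (e, b)   +  c_i c_{i+1} (f,i) +  c_i m_i (f,i)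
       faces     = (f, None) (central pentagon) + (f, Some i) (petal at v_i). *)

Fixpoint lvl (n : nat) : finType * finType * finType :=
  match n with
  | 0 => ('I_5 : finType, 'I_5 : finType, unit : finType)
  | m.+1 =>
    (((lvl m).1.1 + (lvl m).1.2 + ((lvl m).2 * 'I_5))%type : finType,
     (((lvl m).1.2 * bool) + ((lvl m).2 * 'I_5) + ((lvl m).2 * 'I_5))%type
       : finType,
     ((lvl m).2 * option 'I_5)%type : finType)
  end.

Definition VT n : finType := (lvl n).1.1.
Definition ET n : finType := (lvl n).1.2.
Definition FT n : finType := (lvl n).2.

Definition Vold m (v : VT m) : VT m.+1 := inl (inl v).
Definition Vmid m (e : ET m) : VT m.+1 := inl (inr e).
Definition Vcen m (f : FT m) (i : 'I_5) : VT m.+1 := inr (f, i).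
(* half of e: b = false is the half at the source of e, b = true at its target *)
Definition Ehalf m (e : ET m) (b : bool) : ET m.+1 := inl (inl (e, b)).
(* edge c_i c_{i+1} of the subdivision of f (oriented c_i -> c_{i+1}) *)
Definition Ecc m (f : FT m) (i : 'I_5) : ET m.+1 := inl (inr (f, i)).
(* edge c_i m_i of the subdivision of f (oriented c_i -> m_i) *)
Definition Ecm m (f : FT m) (i : 'I_5) : ET m.+1 := inr (f, i).
Definition Fcen m (f : FT m) : FT m.+1 := (f, None).
Definition Fpet m (f : FT m) (i : 'I_5) : FT m.+1 := (f, Some i).

Definition off5 (j i : 'I_5) : nat := (j + 5 - i) %% 5.

Record lstr (n : nat) := LStr {
  lsrc : ET n -> VT n;
  ltgt : ET n -> VT n;
  lcor : FT n -> 'I_5 -> VT n;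
  lfe  : FT n -> 'I_5 -> ET n * bool }.

Fixpoint str (n : nat) : lstr n :=
  match n return lstr n with
  | 0 => @LStr 0 (fun e : 'I_5 => e) (fun e : 'I_5 => ordS e)
                 (fun _ (j : 'I_5) => j) (fun _ (j : 'I_5) => (j, true))
  | m.+1 =>
    let s := str m in
    @LStr m.+1
      (fun x : ET m.+1 =>
         match x with
         | inl (inl (e, b)) => if b then Vmid e else Vold (lsrc s e)
         | inl (inr (f, i)) => Vcen f i
         | inr (f, i) => Vcen f i
         end)
      (fun x : ET m.+1 =>
         match x with
         | inl (inl (e, b)) => if b then Vold (ltgt s e) else Vmid e
         | inl (inr (f, i)) => Vcen f (ordS i)
         | inr (f, i) => Vmid (lfe s f i).1
         end)
      (fun (x : FT m.+1) (j : 'I_5) =>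
         match x with
         | (f, None) => Vcen f (ord_pred j)
         | (f, Some i) =>
           match off5 j i with
           | 0 => Vold (lcor s f i)
           | 1 => Vmid (lfe s f i).1
           | 2 => Vcen f i
           | 3 => Vcen f (ord_pred i)
           | _ => Vmid (lfe s f (ord_pred i)).1
           end
         end)
      (fun (x : FT m.+1) (j : 'I_5) =>
         match x with
         | (f, None) => (Ecc f (ord_pred j), true)
         | (f, Some i) =>
           let (e1, o1) := lfe s f i in
           let (e0, o0) := lfe s f (ord_pred i) in
           match off5 j i with
           | 0 => if o1 then (Ehalf e1 false, true) else (Ehalf e1 true, false)
           | 1 => (Ecm f i, false)
           | 2 => (Ecc f (ord_pred i), false)
           | 3 => (Ecm f (ord_pred i), true)
           | _ => if o0 then (Ehalf e0 true, true) else (Ehalf e0 false, false)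
           end
         end)
  end.

(** The label-preserving embedding K_n -> K_{n+1} onto the central
    superpentagon omega^n(central face of omega(K_0)); it is omega^n of the
    embedding of K_0 onto the central face (v_j |-> c_{j-1}). *)
Record lemb (n : nat) := LEmb {
  eV : VT n -> VT n.+1;
  eE : ET n -> ET n.+1;
  eF : FT n -> FT n.+1 }.

Fixpoint emb (n : nat) : lemb n :=
  match n return lemb n with
  | 0 => @LEmb 0 (fun i : 'I_5 => @Vcen 0 tt (ord_pred i))
                 (fun i : 'I_5 => @Ecc 0 tt (ord_pred i))
                 (fun _ => @Fcen 0 tt)
  | m.+1 =>
    let k := emb m in
    @LEmb m.+1
      (fun x : VT m.+1 =>
         match x with
         | inl (inl v) => Vold (eV k v)
         | inl (inr e) => Vmid (eE k e)
         | inr (f, i) => Vcen (eF k f) i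
         end)
      (fun x : ET m.+1 =>
         match x with
         | inl (inl (e, b)) => Ehalf (eE k e) b
         | inl (inr (f, i)) => Ecc (eF k f) i
         | inr (f, i) => Ecm (eF k f) i
         end)
      (fun x : FT m.+1 => let (f, o) := x in (eF k f, o))
  end.

(** * The direct limit K.  A cell of K is represented by its unique
    representative of minimal level: a pair (n, x) with x a cell of K_n
    which is not in the image of K_{n-1} (when n > 0). *)

Definition canon (T : nat -> finType) (e : forall m, T m -> T m.+1)
  (p : {k : nat & T k}) : bool :=
  let (k, x) := p in
  match k return T k -> bool with
  | 0 => fun _ => true
  | m.+1 => fun x => x \notin codom (e m)
  end x.

Fixpoint norm (T : nat -> finType) (e : forall m, T m -> T m.+1)
  (n : nat) : T n -> {k : nat & T k} :=
  match n return T n -> {k : nat & T k} with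
  | 0 => fun x => existT T 0 x
  | m.+1 => fun x =>
     match [pick y | e m y == x] with
     | Some y => norm e y
     | None => existT T m.+1 x
     end
  end.

Lemma norm_canon (T : nat -> finType) (e : forall m, T m -> T m.+1)
  (n : nat) (x : T n) : canon e (norm e x).
Proof.
elim: n x => [|m IH] x //=.
case: pickP => [y _ | H]; first exact: IH.
rewrite /=; apply/codomP => -[y Hy].
by have := H y; rewrite Hy eqxx.
Qed.

Definition eVs m := eV (emb m).
Definition eEs m := eE (emb m).
Definition eFs m := eF (emb m).

Definition Kvert := {p : {k : nat & VT k} | canon eVs p}.
Definition Kedge := {p : {k : nat & ET k} | canon eEs p}.
Definition Kface := {p : {k : nat & FT k} | canon eFs p}.

Definition toKV n (x : VT n) : Kvert := exist _ (norm eVs x) (norm_canon eVs x).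
Definition toKE n (x : ET n) : Kedge := exist _ (norm eEs x) (norm_canon eEs x).
Definition toKF n (x : FT n) : Kface := exist _ (norm eFs x) (norm_canon eFs x).

Definition Ksrc (e : Kedge) : Kvert :=
  let (k, x) := sval e in toKV (lsrc (str k) x).
Definition Ktgt (e : Kedge) : Kvert :=
  let (k, x) := sval e in toKV (ltgt (str k) x).
Definition Kcorner (f : Kface) (j : 'I_5) : Kvert :=
  let (k, x) := sval f in toKV (lcor (str k) x j).
Definition Kfedge (f : Kface) (j : 'I_5) : Kedge :=
  let (k, x) := sval f in toKE (lfe (str k) x j).1.

Record cx := Cx {
  cV : Kvert -> Prop;
  cE : Kedge -> Prop;
  cF : Kface -> Prop }.

(* A subcomplex: closed under taking boundaries, and (as for the
   2-dimensional subcomplexes of the paper) the union of its closed faces. *)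
Definition subcomplex (P : cx) : Prop :=
  (forall e, cE P e -> cV P (Ksrc e) /\ cV P (Ktgt e)) /\
  (forall f, cF P f -> forall j, cV P (Kcorner f j) /\ cE P (Kfedge f j)) /\
  (forall x, cV P x -> exists f j, cF P f /\ Kcorner f j = x) /\
  (forall e, cE P e -> exists f j, cF P f /\ Kfedge f j = e).

Definition finite_cx (P : cx) : Prop :=
  (exists s : list Kvert, forall x, cV P x -> List.In x s) /\
  (exists s : list Kedge, forall e, cE P e -> List.In e s) /\
  (exists s : list Kface, forall f, cF P f -> List.In f s).

Definition face_adj (P : cx) (f g : Kface) : Prop :=
  cF P f /\ cF P g /\ exists i j, Kfedge f i = Kfedge g j.

Definition chain_connected (P : cx) : Prop :=
  forall f g, cF P f -> cF P g -> clos_refl_trans Kface (face_adj P) f g.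

Record cmap := CMap {
  mV : Kvert -> Kvert;
  mE : Kedge -> Kedge;
  mF : Kface -> Kface }.

(* phi is a cell-preserving isomorphism P -> Q preserving corner labels:
   a bijection of cells of each dimension, compatible with incidences,
   sending the corner (resp. edge) with label j of a face f to the corner
   (resp. edge) with label j of phi(f). *)
Definition cell_iso (P Q : cx) (phi : cmap) : Prop :=
  (forall x, cV P x -> cV Q (mV phi x)) /\
  (forall e, cE P e -> cE Q (mE phi e)) /\
  (forall f, cF P f -> cF Q (mF phi f)) /\
  (forall x y, cV P x -> cV P y -> mV phi x = mV phi y -> x = y) /\
  (forall e d, cE P e -> cE P d -> mE phi e = mE phi d -> e = d) /\
  (forall f g, cF P f -> cF P g -> mF phi f = mF phi g -> f = g) /\
  (forall y, cV Q y -> exists x, cV P x /\ mV phi x = y) /\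
  (forall d, cE Q d -> exists e, cE P e /\ mE phi e = d) /\
  (forall g, cF Q g -> exists f, cF P f /\ mF phi f = g) /\
  (forall e, cE P e ->
     (mV phi (Ksrc e) = Ksrc (mE phi e) /\ mV phi (Ktgt e) = Ktgt (mE phi e)) \/
     (mV phi (Ksrc e) = Ktgt (mE phi e) /\ mV phi (Ktgt e) = Ksrc (mE phi e))) /\
  (forall f, cF P f -> forall j,
     mV phi (Kcorner f j) = Kcorner (mF phi f) j /\
     mE phi (Kfedge f j) = Kfedge (mF phi f) j).

(* Main.v *)
Require Import Defs.
From mathcomp Require Import all_boot zify.
Set Implicit Arguments. Unset Strict Implicit. Unset Printing Implicit Defensive.

Lemma predv (i : 'I_5) : nat_of_ord (ord_pred i) = (i + 4) %% 5.
Proof. by rewrite /= addnS. Qed.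

Lemma lfe_cen m (f : FT m) j : (lfe (str m.+1) (f, None) j).1 = Ecc f (ord_pred j).
Proof. by []. Qed.

Lemma lfe_pet m (f : FT m) i0 j : (lfe (str m.+1) (f, Some i0) j).1 =
  match off5 j i0 with
  | 0 => Ehalf (lfe (str m) f i0).1 (~~ (lfe (str m) f i0).2)
  | 1 => Ecm f i0
  | 2 => Ecc f (ord_pred i0)
  | 3 => Ecm f (ord_pred i0)
  | _ => Ehalf (lfe (str m) f (ord_pred i0)).1 (lfe (str m) f (ord_pred i0)).2
  end.
Proof.
rewrite /=; case: (lfe (str m) f i0) => e1 o1; case: (lfe (str m) f (ord_pred i0)) => e0 o0.
by case: (off5 j i0) => [|[|[|[|d]]]] //=; case: o1; case: o0.
Qed.

Lemma lcor_cen m (f : FT m) j : lcor (str m.+1) (f, None) j = Vcen f (ord_pred j).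
Proof. by []. Qed.

Lemma lcor_pet m (f : FT m) i0 j : lcor (str m.+1) (f, Some i0) j =
  match off5 j i0 with
  | 0 => Vold (lcor (str m) f i0)
  | 1 => Vmid (lfe (str m) f i0).1
  | 2 => Vcen f i0
  | 3 => Vcen f (ord_pred i0)
  | _ => Vmid (lfe (str m) f (ord_pred i0)).1
  end.
Proof. by []. Qed.

Definition d2 (i k : 'I_5) : Prop := off5 k i = 2 \/ off5 k i = 3.

Ltac labs :=
  repeat match goal with
  | H : @eq (ordinal _) _ _ |- _ => move/(congr1 (@nat_of_ord _)): H => H
  | i : _ |- _ => lazymatch goal with
       | H : is_true (@nat_of_ord 5 i < 5) |- _ => fail
       | _ => pose proof (ltn_ord (i : 'I_5)) end
  end;
  unfold d2, off5 in *;
  repeat match goal with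
  | H : context[nat_of_ord (ord_pred ?i)] |- _ => rewrite predv in H
  | |- context[nat_of_ord (ord_pred ?i)] => rewrite predv
  end.




Lemma Ehalf_inj m (e e' : ET m) b b' : Ehalf e b = Ehalf e' b' -> e = e' /\ b = b'.
Proof. by rewrite /Ehalf => -[-> ->]. Qed.
Lemma Ecm_inj m (f f' : FT m) i i' : Ecm f i = Ecm f' i' -> f = f' /\ i = i'.
Proof. by rewrite /Ecm => -[-> ->]. Qed.
Lemma Ecc_inj m (f f' : FT m) i i' : Ecc f i = Ecc f' i' -> f = f' /\ i = i'.
Proof. by rewrite /Ecc => -[-> ->]. Qed.
Lemma Ehalf_Ecm m (e : ET m) b f i : Ehalf e b <> Ecm f i. Proof. by []. Qed.
Lemma Ehalf_Ecc m (e : ET m) b f i : Ehalf e b <> Ecc f i. Proof. by []. Qed.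
Lemma Ecc_Ecm m (e : FT m) (f : FT m) i j : Ecc e j <> Ecm f i. Proof. by []. Qed.

Lemma Vold_inj m (x y : VT m) : Vold x = Vold y -> x = y.
Proof. by rewrite /Vold => -[]. Qed.
Lemma Vmid_inj m (x y : ET m) : Vmid x = Vmid y -> x = y.
Proof. by rewrite /Vmid => -[]. Qed.
Lemma Vcen_inj m (f f' : FT m) i i' : Vcen f i = Vcen f' i' -> f = f' /\ i = i'.
Proof. by rewrite /Vcen => -[-> ->]. Qed.
Lemma Vold_Vmid m (x : VT m) y : Vold x <> Vmid y. Proof. by []. Qed.
Lemma Vold_Vcen m (x : VT m) f i : Vold x <> Vcen f i. Proof. by []. Qed.
Lemma Vmid_Vcen m (x : ET m) f i : Vmid x <> Vcen f i. Proof. by []. Qed.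

Ltac inv H := first
  [ let H1 := fresh "H" in let H2 := fresh "H" in destruct (Ehalf_inj H) as [H1 H2]; clear H
  | let H1 := fresh "H" in let H2 := fresh "H" in destruct (Ecm_inj H) as [H1 H2]; clear H
  | let H1 := fresh "H" in let H2 := fresh "H" in destruct (Ecc_inj H) as [H1 H2]; clear H
  | let H1 := fresh "H" in let H2 := fresh "H" in destruct (Vcen_inj H) as [H1 H2]; clear H
  | let H1 := fresh "H" in have H1 := Vold_inj H; clear H
  | let H1 := fresh "H" in have H1 := Vmid_inj H; clear H
  | exfalso; exact: (Ehalf_Ecm H) | exfalso; exact: (Ehalf_Ecm (esym H))
  | exfalso; exact: (Ehalf_Ecc H) | exfalso; exact: (Ehalf_Ecc (esym H))
  | exfalso; exact: (Ecc_Ecm H) | exfalso; exact: (Ecc_Ecm (esym H))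
  | exfalso; exact: (Vold_Vmid H) | exfalso; exact: (Vold_Vmid (esym H))
  | exfalso; exact: (Vold_Vcen H) | exfalso; exact: (Vold_Vcen (esym H))
  | exfalso; exact: (Vmid_Vcen H) | exfalso; exact: (Vmid_Vcen (esym H)) ].

Ltac ordeq := apply: ord_inj; labs; lia.
Ltac bcontra := match goal with
  | H : ~~ ?b = ?b |- _ => by move: H; case: b
  | H : ?b = ~~ ?b |- _ => by move: H; case: b end.
Ltac fin := first [ bcontra | by right; labs; lia
  | by left; split; [ (by []) || (congr (_, Some _); ordeq) | ordeq ]
  | by exfalso; labs; lia ].

Lemma E_lvl n : forall (f g : FT n) (i k : 'I_5),
  (lfe (str n) f i).1 = (lfe (str n) g k).1 -> (f = g /\ i = k) \/ d2 i k.
Proof.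
elim: n => [|m IH].
  by move=> [] [] i k /= ->; left.
move=> [f [i0|]] [g [i0'|]] i k; rewrite ?lfe_cen ?lfe_pet.
{ case Hd: (off5 i i0) => [|[|[|[|d]]]]; case Hd': (off5 k i0') => [|[|[|[|d']]]];
  move=> H; inv H; subst; try fin.
  all: (match goal with H : (lfe _ _ _).1 = (lfe _ _ _).1 |- _ =>
        case: (IH _ _ _ _ H) => [[E1 E2]|D]; subst end; fin). }
{ case Hd: (off5 i i0) => [|[|[|[|d]]]]; move=> H; inv H; subst; fin. }
{ case Hd': (off5 k i0') => [|[|[|[|d']]]]; move=> H; inv H; subst; fin. }
move=> H; inv H; subst; fin.
Qed.

Ltac fin2 := first [ by [] | by congr (_, Some _); ordeq | by exfalso; labs; lia ].

Lemma C_lvl n : forall (f g : FT n) j, lcor (str n) f j = lcor (str n) g j -> f = g.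
Proof.
elim: n => [|m IH].
  by move=> [] [].
move=> [f [i0|]] [g [i0'|]] j; rewrite ?lcor_cen ?lcor_pet.
{ case Hd: (off5 j i0) => [|[|[|[|d]]]]; case Hd': (off5 j i0') => [|[|[|[|d']]]];
  move=> H; inv H; subst; try fin2.
  all: match goal with
   | H : lcor _ _ ?a = lcor _ _ ?b |- _ =>
       have Eab : b = a by ordeq
   | H : (lfe _ _ _).1 = (lfe _ _ _).1 |- _ =>
       case: (E_lvl H) => [[E1 E2]|D]; subst; fin2 end.
  subst; by rewrite (IH _ _ _ H0). }
{ case Hd: (off5 j i0) => [|[|[|[|d]]]]; move=> H; inv H; subst; fin2. }
{ case Hd': (off5 j i0') => [|[|[|[|d']]]]; move=> H; inv H; subst; fin2. }
move=> H; inv H; subst; fin2.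
Qed.

Lemma emb_inj n : injective (@eVs n) /\ injective (@eEs n) /\ injective (@eFs n).
Proof.
rewrite /eVs /eEs /eFs.
elim: n => [|m [IHv [IHe IHf]]].
  split; [|split].
  - move=> i i' /= [] H; apply: ord_inj; move: (ltn_ord (i:'I_5)) (ltn_ord (i':'I_5)) H; rewrite !addnS /=; lia.
  - move=> i i' /= [] H; apply: ord_inj; move: (ltn_ord (i:'I_5)) (ltn_ord (i':'I_5)) H; rewrite !addnS /=; lia.
  - by move=> [] [].
split; [|split].
- move=> [[v|e]|[f i]] [[v'|e']|[f' i']] //= [].
  + by move/IHv => ->.
  + by move/IHe => ->.
  + by move/IHf => -> ->.
- move=> [[[e b]|[f i]]|[f i]] [[[e' b']|[f' i']]|[f' i']] //= [].
  + by move/IHe => -> ->.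
  + by move/IHf => -> ->.
  + by move/IHf => -> ->.
- by move=> [f o] [f' o'] /= [/IHf -> ->].
Qed.

Lemma lfe_petF m (f : FT m) i0 j : lfe (str m.+1) (f, Some i0) j =
  match off5 j i0 with
  | 0 => (Ehalf (lfe (str m) f i0).1 (~~ (lfe (str m) f i0).2), (lfe (str m) f i0).2)
  | 1 => (Ecm f i0, false)
  | 2 => (Ecc f (ord_pred i0), false)
  | 3 => (Ecm f (ord_pred i0), true)
  | _ => (Ehalf (lfe (str m) f (ord_pred i0)).1 (lfe (str m) f (ord_pred i0)).2, (lfe (str m) f (ord_pred i0)).2)
  end.
Proof.
rewrite /=; case: (lfe (str m) f i0) => e1 o1; case: (lfe (str m) f (ord_pred i0)) => e0 o0.
by case: (off5 j i0) => [|[|[|[|d]]]] //=; case: o1; case: o0.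
Qed.

Lemma emb_str n (x : FT n) j :
  lcor (str n.+1) (eFs x) j = eVs (lcor (str n) x j) /\
  lfe (str n.+1) (eFs x) j = (eEs (lfe (str n) x j).1, (lfe (str n) x j).2).
Proof.
rewrite /eVs /eEs /eFs.
elim: n x j => [|m IH] x j.
  by case: x.
case: x => f [i0|]; last by [].
change (eF (emb m.+1) (f, Some i0)) with (eF (emb m) f, Some i0).
case: (IH f i0) => IH1 IH2; case: (IH f (ord_pred i0)) => IH3 IH4.
rewrite !lcor_pet !lfe_petF IH1 IH2 IH4.
by case: (off5 j i0) => [|[|[|[|d]]]].
Qed.

From Stdlib Require Import Eqdep_dec PeanoNat.

Lemma existT_inj (T : nat -> finType) n (x y : T n) : existT T n x = existT T n y -> x = y.
Proof. exact: (inj_pair2_eq_dec _ Nat.eq_dec). Qed.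

Lemma norm_le (T : nat -> finType) (e : forall m, T m -> T m.+1) n (x : T n) :
  projT1 (norm e x) <= n.
Proof.
elim: n x => [|m IH] x //=.
case: pickP => [y _|_] //=.
exact: leq_trans (IH y) (leqnSn m).
Qed.

Lemma norm_e (T : nat -> finType) (e : forall m, T m -> T m.+1)
  (einj : forall m, injective (e m)) m (y : T m) : norm e (e m y) = norm e y.
Proof.
rewrite /=; case: pickP => [y' /eqP Hy'|H].
  by rewrite (einj _ _ _ Hy').
by have := H y; rewrite eqxx.
Qed.

Lemma norm_inj (T : nat -> finType) (e : forall m, T m -> T m.+1)
  (einj : forall m, injective (e m)) n (x y : T n) : norm e x = norm e y -> x = y.
Proof.
elim: n x y => [|m IH] x y /=.
  exact: existT_inj.
case: pickP => [x1 /eqP Hx|Hx]; case: pickP => [y1 /eqP Hy|Hy].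
- by move/IH => E; rewrite -Hx -Hy E.
- move=> E; have := norm_le e x1; rewrite E /=; by rewrite ltnn.
- move=> E; have := norm_le e y1; rewrite -E /=; by rewrite ltnn.
- exact: existT_inj.
Qed.

Lemma norm_id (T : nat -> finType) (e : forall m, T m -> T m.+1) n (x : T n) :
  canon e (existT T n x) -> norm e x = existT T n x.
Proof.
case: n x => [|m] x //= Hc.
case: pickP => [y /eqP Hy|//].
by move: Hc; rewrite -Hy codom_f.
Qed.

Lemma eVs_inj m : injective (@eVs m). Proof. by case: (emb_inj m). Qed.
Lemma eEs_inj m : injective (@eEs m). Proof. by case: (emb_inj m) => _ []. Qed.
Lemma eFs_inj m : injective (@eFs m). Proof. by case: (emb_inj m) => _ []. Qed.

Lemma lift_gen (W : nat -> finType) (eW : forall m, W m -> W m.+1)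
  (eWinj : forall m, injective (eW m)) (cor : forall n, FT n -> W n)
  (Hc : forall n (x : FT n), cor n.+1 (eFs x) = eW n (cor n x))
  (Hl : forall n (x y : FT n), cor n x = cor n y -> x = y) :
  forall k l (x : FT k) (y : FT l),
  norm eW (cor k x) = norm eW (cor l y) -> norm eFs x = norm eFs y.
Proof.
suff: forall d k l (x : FT k) (y : FT l), (l - k) + (k - l) <= d ->
  norm eW (cor k x) = norm eW (cor l y) -> norm eFs x = norm eFs y.
  by move=> H k l x y; apply: (H _ k l x y (leqnn _)).
elim=> [|d IH] k l x y Hd E.
  have Ekl : k = l by lia.
  subst l; by rewrite (Hl _ _ _ (norm_inj eWinj E)).
case: (ltngtP k l) => Hkl.
- rewrite -(norm_e eFs_inj x); apply: IH; first lia.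
  by rewrite Hc norm_e.
- rewrite -(norm_e eFs_inj y); apply: IH; first lia.
  by rewrite Hc norm_e.
- subst l; by rewrite (Hl _ _ _ (norm_inj eWinj E)).
Qed.

Lemma Kface_eq (f g : Kface) : sval f = sval g -> f = g.
Proof.
case: f g => [p Hp] [q Hq] /= E; subst q.
by rewrite (bool_irrelevance Hp Hq).
Qed.

Lemma Kcorner_inj (f g : Kface) j : Kcorner f j = Kcorner g j -> f = g.
Proof.
case: f => [[k x] Hf]; case: g => [[l y] Hg]; rewrite /Kcorner /= => /(congr1 sval) /= E.
have := @lift_gen VT eVs eVs_inj (fun n x => lcor (str n) x j)
  (fun n x => proj1 (emb_str x j)) (fun n x y => @C_lvl n x y j) k l x y E.
rewrite (norm_id Hf) (norm_id Hg) => E2.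
exact: Kface_eq.
Qed.

Lemma Kfedge_inj (f g : Kface) j : Kfedge f j = Kfedge g j -> f = g.
Proof.
case: f => [[k x] Hf]; case: g => [[l y] Hg]; rewrite /Kfedge /= => /(congr1 sval) /= E.
have Hc : forall n (x : FT n), (lfe (str n.+1) (eFs x) j).1 = eEs (lfe (str n) x j).1.
  by move=> n z; rewrite (proj2 (emb_str z j)).
have Hl : forall n (x y : FT n), (lfe (str n) x j).1 = (lfe (str n) y j).1 -> x = y.
  move=> n u w H; case: (E_lvl H) => [[]//|]; rewrite /d2 /off5; lia.
have := @lift_gen ET eEs eEs_inj (fun n x => (lfe (str n) x j).1) Hc Hl k l x y E.
rewrite (norm_id Hf) (norm_id Hg) => E2.
exact: Kface_eq.
Qed.

Theorem propositionp (v : Kvert) (P Q : cx) (phi : cmap) :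
  subcomplex P -> subcomplex Q ->
  finite_cx P -> finite_cx Q ->
  chain_connected P -> chain_connected Q ->
  cV P v -> cV Q v ->
  cell_iso P Q phi -> mV phi v = v ->
  (forall x, cV P x <-> cV Q x) /\
  (forall e, cE P e <-> cE Q e) /\
  (forall f, cF P f <-> cF Q f).
Proof.
move=> [sPe [sPf [sPv sPd]]] [sQe [sQf [sQv sQd]]] _ _ ccP _ vP _ iso Hv.
case: iso => [isV [isE [isF [injV [injE [injF [surV [surE [surF [_ Hinc]]]]]]]]]].
have [f0 [j0 [Hf0 Hc0]]] := sPv v vP.
have fix0 : mF phi f0 = f0.
  apply: (@Kcorner_inj _ _ j0).
  by rewrite -(proj1 (Hinc f0 Hf0 j0)) Hc0 Hv.
have fixP : forall g, cF P g -> mF phi g = g.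
  move=> g Hg; move: fix0; elim: (ccP f0 g Hf0 Hg) => [x y [Hx [Hy [i [j Hij]]]]|x|x y z _ IH1 _ IH2] //.
  - move=> Fx; apply: (@Kfedge_inj _ _ j).
    rewrite -(proj2 (Hinc y Hy j)) -Hij (proj2 (Hinc x Hx i)) Fx //.
  - move=> Fx; exact: IH2 (IH1 Fx).
have HF : forall f, cF P f <-> cF Q f.
  move=> f; split=> Hf.
    by rewrite -(fixP f Hf); apply: isF.
  have [g [Hg Eg]] := surF f Hf.
  by rewrite -Eg fixP.
split; [|split] => //.
- move=> x; split=> Hx.
    have [f [j [Hf <-]]] := sPv x Hx; exact: (proj1 (sQf f (proj1 (HF f) Hf) j)).
  have [f [j [Hf <-]]] := sQv x Hx; exact: (proj1 (sPf f (proj2 (HF f) Hf) j)).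
- move=> x; split=> Hx.
    have [f [j [Hf <-]]] := sPd x Hx; exact: (proj2 (sQf f (proj1 (HF f) Hf) j)).
  have [f [j [Hf <-]]] := sQd x Hx; exact: (proj2 (sPf f (proj2 (HF f) Hf) j)).
Qed.
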